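(* Let $f:[0,\infty)\to[0,\infty)$ be non-increasing with $f(0)=1$ and $f\in C^4([0,\infty))$, let $\mathcal L(\gamma)=\int_0^\infty e^{-\gamma x}f(x)dx$ and $\gamma_{\min}=\inf\{\gamma\in\mathbb R:\mathcal L(\gamma)<\infty\}$, and assume that for every $\gamma>\gamma_{\min}$ and $j=0,1,2,3,4$, $e^{-\gamma x}f^{(j)}(x)\in L^1([0,\infty))$ and $e^{-\gamma x}f^{(j)}(x)\to0$ as $x\to\infty$. For $s\ge1$ and $\rho=1-\gamma/\sqrt s$ define $F_s(\rho)=\sum_{n=0}^\infty f\bigl(\tfrac{n+1}{\sqrt s}\bigr)\rho^{n+1}$ and $\gamma_s=-\sqrt s\ln(1-\gamma/\sqrt s)$. Then for $\gamma_{\min}<\gamma\le\sqrt s$, $F_s(\rho)=\sqrt s\,\mathcal L(\gamma_s)-\tfrac12+O(1/\sqrt s)$, where the $O(1/\sqrt s)$ holds uniformly in $\gamma$ in any compact subset of $(\gamma_{\min},\infty)$.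
   Context: $F_s(\rho)$ is the quantity $\sum_{n\ge0}p_s(0)\cdots p_s(n)\rho^{n+1}$ for an $s$-server system with admission control under the global control $p_s(0)\cdots p_s(n)=f((n+1)/\sqrt s)$. *)

(* Defs.v *)
From Stdlib Require Import Reals.
From Coquelicot Require Import Coquelicot.
Open Scope R_scope.

Definition has_integral_0_infty (g : R -> R) (l : R) : Prop :=
  is_RInt_gen g (at_point 0) (Rbar_locally p_infty) l.

Definition integrable_0_infty (g : R -> R) : Prop :=
  ex_RInt_gen g (at_point 0) (Rbar_locally p_infty).

Definition derive_on_nonneg (g : R -> R) (x l : R) : Prop :=
  filterlim (fun y => (g y - g x) / (y - x))
    (within (fun y => 0 <= y /\ y <> x) (locally x)) (locally l).

Definition continuous_on_nonneg_at (g : R -> R) (x : R) : Prop :=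
  filterlim g (within (fun y => 0 <= y) (locally x)) (locally (g x)).

Definition C4_nonneg (f : R -> R) (d : nat -> R -> R) : Prop :=
  (forall x, 0 <= x -> d 0%nat x = f x) /\
  (forall j x, (j < 4)%nat -> 0 <= x -> derive_on_nonneg (d j) x (d (S j) x)) /\
  (forall x, 0 <= x -> continuous_on_nonneg_at (d 4%nat) x).

(* The Laplace transform L(gamma) is finite (f >= 0, so this is convergence
   of the improper integral of the nonnegative integrand). *)
Definition laplace_finite (f : R -> R) (gam : R) : Prop :=
  integrable_0_infty (fun x => exp (- gam * x) * f x).

Definition gamma_min (f : R -> R) : Rbar :=
  Glb_Rbar (fun gam => laplace_finite f gam).

Definition gamma_s (s gam : R) : R := - sqrt s * ln (1 - gam / sqrt s).

Definition rho_of (s gam : R) : R := 1 - gam / sqrt s.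

Definition Fs_term (f : R -> R) (s rho : R) (n : nat) : R :=
  f (INR (S n) / sqrt s) * rho ^ (S n).

(* Main.v *)
Require Import Defs.
From Stdlib Require Import Reals.
From Coquelicot Require Import Coquelicot.
From Stdlib Require Import Lra Lia.
Open Scope R_scope.


Lemma don_eps g x l : derive_on_nonneg g x l ->
  forall eps, 0 < eps -> exists del, 0 < del /\ forall y, 0 <= y -> y <> x -> Rabs (y - x) < del ->
    Rabs ((g y - g x) / (y - x) - l) < eps.
Proof.
  intros H eps Heps.
  destruct (H (ball l eps) (locally_ball l (mkposreal eps Heps))) as [d Hd].
  exists d. split. apply cond_pos. intros y Hy Hyx Hd'.
  apply (Hd y). exact Hd'. split; auto.
Qed.

Definition glue (phi p : R -> R) (y : R) : R := if Rle_dec 0 y then phi y else p y.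

Lemma glue_derive (phi psi p q : R -> R) :
 (forall x, 0 <= x -> derive_on_nonneg phi x (psi x)) ->
 (forall x, is_derive p x (q x)) -> p 0 = phi 0 -> q 0 = psi 0 ->
 forall x, is_derive (glue phi p) x (glue psi q x).
Proof.
  intros Hphi Hp Hp0 Hq0 x. apply is_derive_Reals. intros eps Heps.
  unfold glue.
  destruct (Rtotal_order x 0) as [Hx|[Hx|Hx]].
  - destruct (proj1 (is_derive_Reals _ _ _) (Hp x) eps Heps) as [d Hd].
    assert (Hpos : 0 < Rmin d (-x)) by (apply Rmin_pos; [apply cond_pos|lra]).
    exists (mkposreal _ Hpos). intros h Hh Hhd. simpl in Hhd.
    assert (Hh1 := Rmin_l d (-x)). assert (Hh2 := Rmin_r d (-x)).
    assert (Hab := Rle_abs h). assert (Hab2 := Rle_abs (-h)). rewrite Rabs_Ropp in Hab2.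
    destruct (Rle_dec 0 (x+h)); [lra|]. destruct (Rle_dec 0 x); [lra|].
    apply Hd; auto. lra.
  - subst x.
    destruct (proj1 (is_derive_Reals _ _ _) (Hp 0) eps Heps) as [d Hd].
    destruct (don_eps _ _ _ (Hphi 0 (Rle_refl 0)) eps Heps) as [d2 [Hd2 H2]].
    assert (Hpos : 0 < Rmin d d2) by (apply Rmin_pos; [apply cond_pos|lra]).
    exists (mkposreal _ Hpos). intros h Hh Hhd. simpl in Hhd.
    assert (Hh1 := Rmin_l d d2). assert (Hh2 := Rmin_r d d2).
    destruct (Rle_dec 0 0); [|lra].
    destruct (Rle_dec 0 (0+h)).
    + assert (E: (phi (0+h) - phi 0)/h = (phi (0+h) - phi 0)/((0+h) - 0)) by (f_equal; ring).
      rewrite E. apply H2; auto; try lra.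
      replace (0+h-0) with h by ring. lra.
    + rewrite <- Hp0, <- Hq0. apply Hd; auto. lra.
  - destruct (don_eps _ _ _ (Hphi x (Rlt_le _ _ Hx)) eps Heps) as [d2 [Hd2 H2]].
    assert (Hpos : 0 < Rmin x d2) by (apply Rmin_pos; lra).
    exists (mkposreal _ Hpos). intros h Hh Hhd. simpl in Hhd.
    assert (Hh1 := Rmin_l x d2). assert (Hh2 := Rmin_r x d2).
    assert (Hab := Rle_abs h). assert (Hab2 := Rle_abs (-h)). rewrite Rabs_Ropp in Hab2.
    destruct (Rle_dec 0 (x+h)); [|lra]. destruct (Rle_dec 0 x); [|lra].
    assert (E: (phi (x+h) - phi x)/h = (phi (x+h) - phi x)/((x+h) - x)) by (f_equal; ring).
    rewrite E. apply H2; try lra.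
    replace (x+h-x) with h by ring. lra.
Qed.


Definition E3 (d : nat -> R -> R) := glue (d 3%nat) (fun _ => d 3%nat 0).
Definition E2 (d : nat -> R -> R) := glue (d 2%nat) (fun x => d 2%nat 0 + d 3%nat 0 * x).
Definition E1 (d : nat -> R -> R) := glue (d 1%nat) (fun x => d 1%nat 0 + d 2%nat 0 * x + d 3%nat 0 * x^2/2).
Definition E0 (d : nat -> R -> R) := glue (d 0%nat) (fun x => d 0%nat 0 + d 1%nat 0 * x + d 2%nat 0 * x^2/2 + d 3%nat 0 * x^3/6).

Lemma glue_pos phi p x : 0 <= x -> glue phi p x = phi x.
Proof. intros; unfold glue; destruct (Rle_dec 0 x); lra. Qed.

Lemma E_derivs f d : C4_nonneg f d -> forall x,
  is_derive (E0 d) x (E1 d x) /\ is_derive (E1 d) x (E2 d x) /\ is_derive (E2 d) x (E3 d x).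
Proof.
  intros [H0 [H1 H2]] x. unfold E0, E1, E2, E3. split; [|split].
  - apply (glue_derive (d 0%nat) (d 1%nat)).
    + intros; apply H1; auto.
    + intros y; auto_derive; auto; simpl; field.
    + simpl; field.
    + simpl; field.
  - apply (glue_derive (d 1%nat) (d 2%nat)).
    + intros; apply H1; auto.
    + intros y; auto_derive; auto; simpl; field.
    + simpl; field.
    + simpl; field.
  - apply (glue_derive (d 2%nat) (d 3%nat)).
    + intros; apply H1; auto.
    + intros y; auto_derive; auto; simpl; field.
    + simpl; field.
    + simpl; field.
Qed.

Definition G0 d c x := exp (-c*x) * E0 d x.
Definition G1 d c x := exp (-c*x) * (E1 d x - c * E0 d x).
Definition G2 d c x := exp (-c*x) * (E2 d x - 2*c*E1 d x + c^2 * E0 d x).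

Lemma G_derivs f d c : C4_nonneg f d -> forall x,
  is_derive (G0 d c) x (G1 d c x) /\ is_derive (G1 d c) x (G2 d c x) /\ ex_derive (G2 d c) x.
Proof.
  intros HC x. destruct (E_derivs f d HC x) as [D0 [D1 D2]].
  unfold G0, G1, G2. split; [|split].
  - auto_derive. exists (E1 d x); auto.
    rewrite (is_derive_unique (fun x0 : R => E0 d x0) x _ D0). ring.
  - auto_derive. split. exists (E2 d x); auto. split; auto. exists (E1 d x); auto.
    rewrite (is_derive_unique (fun x0 : R => E0 d x0) x _ D0).
    rewrite (is_derive_unique (fun x0 : R => E1 d x0) x _ D1). ring.
  - auto_derive. split. exists (E3 d x); auto. split. exists (E2 d x); auto. split; auto. exists (E1 d x); auto.
Qed.

Lemma trap_int f d c l h : C4_nonneg f d -> 0 < h ->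
  is_RInt (fun x => G0 d c x + (x-l)*((l+h)-x)/2 * G2 d c x) l (l+h) (h/2*(G0 d c l + G0 d c (l+h))).
Proof.
  intros HC Hh.
  set (P := fun x => (x-l)*((l+h)-x)/2 * G1 d c x + (x - (l + h/2)) * G0 d c x).
  replace (h/2*(G0 d c l + G0 d c (l+h))) with (minus (P (l+h)) (P l)).
  2:{ unfold P, minus, plus, opp; simpl. field. }
  apply (@is_RInt_derive R_CompleteNormedModule P (fun x => G0 d c x + (x-l)*((l+h)-x)/2 * G2 d c x)).
  - intros x _. destruct (G_derivs f d c HC x) as [D0 [D1 D2]].
    unfold P. auto_derive. repeat split; auto. exists (G2 d c x); auto. exists (G1 d c x); auto.
    rewrite (is_derive_unique (fun x0 : R => G0 d c x0) x _ D0).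
    rewrite (is_derive_unique (fun x0 : R => G1 d c x0) x _ D1). field.
  - intros x _. apply (@ex_derive_continuous R_AbsRing R_NormedModule).
    destruct (G_derivs f d c HC x) as [D0 [D1 D2]].
    auto_derive. repeat split; auto. exists (G1 d c x); auto.
Qed.


Fixpoint sumr (u : nat -> R) (N : nat) : R :=
  match N with O => 0 | S N => sumr u N + u N end.

Lemma sumr_S u N : sumr u (S N) = sumr u N + u N.
Proof. reflexivity. Qed.

Section Sum.
Variables (f : R -> R) (d : nat -> R -> R) (c h : R) (Hf : R -> R).
Hypothesis HC : C4_nonneg f d.
Hypothesis Hh : 0 < h.
Hypothesis Hfc : forall x, continuous Hf x.
Hypothesis Hfb : forall x, 0 <= x -> Rabs (G2 d c x) <= Hf x.

Definition Kn (l x : R) := (x - l) * ((l + h) - x) / 2.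
Definition En (n : nat) := RInt (fun x => Kn (INR n * h) x * G2 d c x) (INR n * h) (INR n * h + h).

Lemma G0_cont x : continuous (G0 d c) x.
Proof. apply (@ex_derive_continuous R_AbsRing R_NormedModule).
  destruct (G_derivs f d c HC x) as [D0 _]. exists (G1 d c x); auto. Qed.

Lemma KG2_cont l x : continuous (fun x => Kn l x * G2 d c x) x.
Proof. apply (@ex_derive_continuous R_AbsRing R_NormedModule).
  destruct (G_derivs f d c HC x) as [_ [_ D2]]. unfold Kn. auto_derive. auto. Qed.

Lemma ex_G0 a b : ex_RInt (G0 d c) a b.
Proof. apply (@ex_RInt_continuous R_CompleteNormedModule). intros; apply G0_cont. Qed.

Lemma ex_KG2 l a b : ex_RInt (fun x => Kn l x * G2 d c x) a b.
Proof. apply (@ex_RInt_continuous R_CompleteNormedModule). intros; apply KG2_cont. Qed.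

Lemma ex_Hf a b : ex_RInt Hf a b.
Proof. apply (@ex_RInt_continuous R_CompleteNormedModule). intros; apply Hfc. Qed.

Lemma step_id l : RInt (G0 d c) l (l + h) + RInt (fun x => Kn l x * G2 d c x) l (l+h)
   = h/2*(G0 d c l + G0 d c (l+h)).
Proof.
  rewrite <- (is_RInt_unique _ _ _ _ (trap_int f d c l h HC Hh)).
  symmetry. apply (RInt_plus (V := R_CompleteNormedModule) (G0 d c) (fun x => Kn l x * G2 d c x)).
  apply ex_G0. apply ex_KG2.
Qed.

Lemma step_bound l : 0 <= l -> Rabs (RInt (fun x => Kn l x * G2 d c x) l (l+h)) <= h^2/8 * RInt Hf l (l+h).
Proof.
  intros Hl.
  eapply Rle_trans. apply abs_RInt_le. lra. apply ex_KG2.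
  assert (E : h^2/8 * RInt Hf l (l+h) = RInt (fun x => h^2/8 * Hf x) l (l+h)).
  { symmetry. apply (RInt_scal (V := R_CompleteNormedModule) Hf l (l+h) (h^2/8)). apply ex_Hf. }
  rewrite E. apply RInt_le. lra.
  apply (@ex_RInt_continuous R_CompleteNormedModule). intros; apply continuous_Rabs_comp, KG2_cont.
  apply (@ex_RInt_continuous R_CompleteNormedModule). intros. apply (continuous_mult (fun _ => h^2/8) Hf).
  apply continuous_const. apply Hfc.
  intros x Hx. rewrite Rabs_mult. apply Rmult_le_compat; try apply Rabs_pos.
  unfold Kn. rewrite Rabs_pos_eq. { assert (0 <= (2*x - 2*l - h)^2) by apply pow2_ge_0. nra. } { assert (0 < x - l) by lra. assert (0 < l+h-x) by lra. assert (0 <= (x-l)*(l+h-x)) by nra. lra. } apply Hfb. lra.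
Qed.


Lemma sum_id N : RInt (G0 d c) 0 (INR N * h) + sumr En N =
  h/2 * (G0 d c 0 + 2 * sumr (fun n => G0 d c (INR (S n) * h)) N - G0 d c (INR N * h)).
Proof.
  induction N as [|N IH].
  - simpl. rewrite Rmult_0_l, RInt_point. unfold zero; simpl. ring.
  - rewrite !sumr_S. rewrite S_INR. replace ((INR N + 1) * h) with (INR N * h + h) by ring.
    rewrite <- (RInt_Chasles (V := R_CompleteNormedModule) (G0 d c) 0 (INR N * h) (INR N * h + h)) by apply ex_G0.
    set (SS := sumr (fun n => G0 d c (INR (S n) * h)) N) in *.
    unfold plus; simpl.
    assert (Hs := step_id (INR N * h)). unfold En at 2.
    lra.
Qed.

Lemma sum_bound N : Rabs (sumr En N) <= h^2/8 * RInt Hf 0 (INR N * h).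
Proof.
  induction N as [|N IH].
  - simpl. rewrite Rmult_0_l, RInt_point, Rabs_R0. unfold zero; simpl. lra.
  - rewrite !sumr_S. rewrite S_INR. replace ((INR N + 1) * h) with (INR N * h + h) by ring.
    rewrite <- (RInt_Chasles (V := R_CompleteNormedModule) Hf 0 (INR N * h) (INR N * h + h)) by apply ex_Hf.
    unfold plus; simpl.
    assert (Hs := step_bound (INR N * h)). unfold En at 2.
    assert (0 <= INR N * h) by (apply Rmult_le_pos; [apply pos_INR|lra]).
    specialize (Hs H).
    eapply Rle_trans. apply Rabs_triang. lra.
Qed.

End Sum.


Lemma gen_extract (phi : R -> R) A eps : 0 < eps ->
  is_RInt_gen phi (at_point 0) (Rbar_locally p_infty) A ->
  exists M, forall b, M < b -> exists y, is_RInt phi 0 b y /\ Rabs (y - A) < eps.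
Proof.
  intros He H.
  destruct (H (ball A eps) (locally_ball A (mkposreal eps He))) as [Q R0 HQ [M HM] HP].
  exists M. intros b Hb. destruct (HP 0 b HQ (HM b Hb)) as [y [Hy1 Hy2]].
  exists y. split. exact Hy1. exact Hy2.
Qed.

Lemma gen_le (phi : R -> R) A T : is_RInt_gen phi (at_point 0) (Rbar_locally p_infty) A ->
  0 <= T -> (forall x, 0 <= x -> 0 <= phi x) -> RInt phi 0 T <= A.
Proof.
  intros H HT Hpos. destruct (Rle_or_lt (RInt phi 0 T) A) as [|Hlt]; auto.
  exfalso. destruct (gen_extract phi A (RInt phi 0 T - A) ltac:(lra) H) as [M HM].
  destruct (HM (Rmax T M + 1)) as [y [Hy1 Hy2]].
  { assert (Hm := Rmax_r T M). lra. }
  assert (Hm := Rmax_l T M).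
  assert (Ex : ex_RInt phi 0 (Rmax T M + 1)) by (exists y; auto).
  assert (Hc := RInt_Chasles (V := R_CompleteNormedModule) phi 0 T (Rmax T M + 1)).
  rewrite (is_RInt_unique _ _ _ _ Hy1) in Hc.
  assert (0 <= RInt phi T (Rmax T M + 1)).
  { apply RInt_ge_0. lra. apply (ex_RInt_Chasles_2 phi 0). lra. auto. intros; apply Hpos; lra. }
  rewrite <- Hc in Hy2.
  2: apply (ex_RInt_Chasles_1 phi 0 T (Rmax T M + 1)); [lra|auto].
  2: apply (ex_RInt_Chasles_2 phi 0 T (Rmax T M + 1)); [lra|auto].
  unfold plus in Hy2; simpl in Hy2.
  assert (Hab := Rle_abs (RInt phi 0 T + RInt phi T (Rmax T M + 1) - A)). lra.
Qed.

Lemma gen_lim_seq (phi : R -> R) A h : is_RInt_gen phi (at_point 0) (Rbar_locally p_infty) A ->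
  0 < h -> is_lim_seq (fun N => RInt phi 0 (INR N * h)) A.
Proof.
  intros H Hh P [eps HP].
  destruct (gen_extract phi A eps (cond_pos eps) H) as [M HM].
  assert (Hl := is_lim_seq_scal_r INR h p_infty is_lim_seq_INR).
  replace (Rbar_mult p_infty h) with p_infty in Hl.
  2:{ simpl. destruct (Rle_dec 0 h); [|lra]. destruct (Rle_lt_or_eq_dec 0 h r); [reflexivity|lra]. }
  destruct (Hl (fun x => M < x) (ex_intro _ M (fun x Hx => Hx))) as [N0 HN0].
  exists N0. intros n Hn. specialize (HN0 n Hn). simpl in HN0.
  destruct (HM _ HN0) as [y [Hy1 Hy2]]. apply HP.
  rewrite (is_RInt_unique _ _ _ _ Hy1). exact Hy2.
Qed.


Lemma exp_le x y : x <= y -> exp x <= exp y.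
Proof. intros [H|H]. apply Rlt_le, exp_increasing, H. subst; lra. Qed.

Definition pj (a : R) (E : R -> R) (x : R) := Rabs (exp (-a*x) * E x).
Definition Hfun d a M x := pj a (E2 d) x + 2*M*pj a (E1 d) x + M^2 * pj a (E0 d) x.

Lemma pj_cont a (E : R -> R) x : (forall y, ex_derive E y) -> continuous (pj a E) x.
Proof.
  intros HE. unfold pj. apply continuous_Rabs_comp.
  apply (@ex_derive_continuous R_AbsRing R_NormedModule). auto_derive. auto.
Qed.

Lemma Hfun_cont f d a M : C4_nonneg f d -> forall x, continuous (Hfun d a M) x.
Proof.
  intros HC x.
  assert (H0 : forall y, ex_derive (E0 d) y) by (intros y; destruct (E_derivs f d HC y) as [D _]; exists (E1 d y); auto).
  assert (H1 : forall y, ex_derive (E1 d) y) by (intros y; destruct (E_derivs f d HC y) as [_ [D _]]; exists (E2 d y); auto).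
  assert (H2 : forall y, ex_derive (E2 d) y) by (intros y; destruct (E_derivs f d HC y) as [_ [_ D]]; exists (E3 d y); auto).
  unfold Hfun.
  apply (continuous_plus (fun x => pj a (E2 d) x + 2*M*pj a (E1 d) x) (fun x => M^2 * pj a (E0 d) x)).
  apply (continuous_plus (fun x => pj a (E2 d) x) (fun x => 2*M*pj a (E1 d) x)).
  apply pj_cont; auto.
  apply (continuous_mult (fun _ => 2*M) (pj a (E1 d))). apply continuous_const. apply pj_cont; auto.
  apply (continuous_mult (fun _ => M^2) (pj a (E0 d))). apply continuous_const. apply pj_cont; auto.
Qed.

Lemma Hfun_bound d a M c x : 0 <= x -> a <= c -> Rabs c <= M ->
  Rabs (G2 d c x) <= Hfun d a M x.
Proof.
  intros Hx Hac HM. unfold G2, Hfun, pj.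
  rewrite !Rabs_mult. rewrite !(Rabs_pos_eq (exp (-a*x))) by (apply Rlt_le, exp_pos).
  rewrite (Rabs_pos_eq (exp (-c*x))) by (apply Rlt_le, exp_pos).
  assert (He : exp (-c*x) <= exp (-a*x)) by (apply exp_le; nra).
  assert (Hp := exp_pos (-c*x)).
  set (u := exp (-c*x)) in *. set (v := exp (-a*x)) in *.
  assert (Hm : 0 <= M) by (assert (Hh := Rabs_pos c); lra).
  assert (Ht : Rabs (E2 d x - 2 * c * E1 d x + c ^ 2 * E0 d x) <=
     Rabs (E2 d x) + 2 * M * Rabs (E1 d x) + M ^ 2 * Rabs (E0 d x)).
  { eapply Rle_trans; [apply Rabs_triang|].
    eapply Rle_trans; [apply Rplus_le_compat_r; unfold Rminus; apply Rabs_triang|].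
    rewrite Rabs_Ropp, !Rabs_mult. rewrite (Rabs_pos_eq 2) by lra.
    rewrite (Rabs_pos_eq (c^2)) by (apply pow2_ge_0).
    assert (Hc2 : c^2 <= M^2). { rewrite <- (pow2_abs c). assert (0 <= Rabs c) by apply Rabs_pos. nra. }
    assert (0 <= Rabs (E1 d x)) by apply Rabs_pos. assert (0 <= Rabs (E0 d x)) by apply Rabs_pos.
    nra. }
  set (X := Rabs (E2 d x - 2 * c * E1 d x + c ^ 2 * E0 d x)) in *.
  set (Y := Rabs (E2 d x) + 2 * M * Rabs (E1 d x) + M ^ 2 * Rabs (E0 d x)) in *.
  assert (0 <= X) by apply Rabs_pos.
  apply Rle_trans with (v * Y). nra. unfold Y. lra.
Qed.

Lemma pj_le f d a j (Ej : R -> R) A T : C4_nonneg f d -> 0 <= T ->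
  (forall x, 0 <= x -> Ej x = d j x) -> (forall y, ex_derive Ej y) ->
  is_RInt_gen (fun x => Rabs (exp (-a*x) * d j x)) (at_point 0) (Rbar_locally p_infty) A ->
  RInt (pj a Ej) 0 T <= A.
Proof.
  intros HC HT HE HD HA.
  rewrite (RInt_ext (pj a Ej) (fun x => Rabs (exp (-a*x) * d j x))).
  apply gen_le; auto. intros; apply Rabs_pos.
  intros x Hx. rewrite Rmin_left in Hx by lra. unfold pj. rewrite HE; auto. lra.
Qed.

Lemma Hfun_int f d a M A0 A1 A2 T : C4_nonneg f d -> 0 <= M -> 0 <= T ->
  is_RInt_gen (fun x => Rabs (exp (-a*x) * d 0%nat x)) (at_point 0) (Rbar_locally p_infty) A0 ->
  is_RInt_gen (fun x => Rabs (exp (-a*x) * d 1%nat x)) (at_point 0) (Rbar_locally p_infty) A1 ->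
  is_RInt_gen (fun x => Rabs (exp (-a*x) * d 2%nat x)) (at_point 0) (Rbar_locally p_infty) A2 ->
  RInt (Hfun d a M) 0 T <= A2 + 2*M*A1 + M^2*A0.
Proof.
  intros HC HM HT HA0 HA1 HA2.
  assert (D0 : forall y, ex_derive (E0 d) y) by (intros y; destruct (E_derivs f d HC y) as [D _]; exists (E1 d y); auto).
  assert (D1 : forall y, ex_derive (E1 d) y) by (intros y; destruct (E_derivs f d HC y) as [_ [D _]]; exists (E2 d y); auto).
  assert (D2 : forall y, ex_derive (E2 d) y) by (intros y; destruct (E_derivs f d HC y) as [_ [_ D]]; exists (E3 d y); auto).
  assert (X0 : ex_RInt (pj a (E0 d)) 0 T) by (apply (@ex_RInt_continuous R_CompleteNormedModule); intros; apply pj_cont; auto).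
  assert (X1 : ex_RInt (pj a (E1 d)) 0 T) by (apply (@ex_RInt_continuous R_CompleteNormedModule); intros; apply pj_cont; auto).
  assert (X2 : ex_RInt (pj a (E2 d)) 0 T) by (apply (@ex_RInt_continuous R_CompleteNormedModule); intros; apply pj_cont; auto).
  assert (L0 : RInt (pj a (E0 d)) 0 T <= A0).
  { apply (pj_le f d a 0%nat); auto. intros; unfold E0; apply glue_pos; auto. }
  assert (L1 : RInt (pj a (E1 d)) 0 T <= A1).
  { apply (pj_le f d a 1%nat); auto. intros; unfold E1; apply glue_pos; auto. }
  assert (L2 : RInt (pj a (E2 d)) 0 T <= A2).
  { apply (pj_le f d a 2%nat); auto. intros; unfold E2; apply glue_pos; auto. }
  assert (HI : is_RInt (Hfun d a M) 0 T
     (plus (plus (RInt (pj a (E2 d)) 0 T) (scal (2*M) (RInt (pj a (E1 d)) 0 T))) (scal (M^2) (RInt (pj a (E0 d)) 0 T)))).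
  { apply (is_RInt_plus (V := R_NormedModule) (fun x => pj a (E2 d) x + 2*M*pj a (E1 d) x) (fun x => M^2 * pj a (E0 d) x)).
    apply (is_RInt_plus (V := R_NormedModule) (fun x => pj a (E2 d) x) (fun x => 2*M*pj a (E1 d) x)).
    apply (RInt_correct (V := R_CompleteNormedModule)); auto.
    apply (is_RInt_scal (V := R_NormedModule) (pj a (E1 d))). apply (RInt_correct (V := R_CompleteNormedModule)); auto.
    apply (is_RInt_scal (V := R_NormedModule) (pj a (E0 d))). apply (RInt_correct (V := R_CompleteNormedModule)); auto. }
  rewrite (is_RInt_unique _ _ _ _ HI). unfold plus, scal; simpl. unfold mult; simpl.
  assert (0 <= M^2) by apply pow2_ge_0. nra.
Qed.


Lemma sum_n_sumr (u : nat -> R) N : sum_n u N = sumr u (S N).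
Proof.
  induction N as [|N IH].
  - rewrite sum_O. simpl. ring.
  - rewrite sum_Sn, IH. rewrite (sumr_S u (S N)). reflexivity.
Qed.

Theorem theorem4p1 (f : R -> R) (d : nat -> R -> R)
  (f_nonneg : forall x, 0 <= x -> 0 <= f x)
  (f_noninc : forall x y, 0 <= x -> x <= y -> f y <= f x)
  (f0 : f 0 = 1)
  (fC4 : C4_nonneg f d)
  (f_L1 : forall gam j, Rbar_lt (gamma_min f) (Finite gam) -> (j <= 4)%nat ->
            integrable_0_infty (fun x => Rabs (exp (- gam * x) * d j x)))
  (f_lim : forall gam j, Rbar_lt (gamma_min f) (Finite gam) -> (j <= 4)%nat ->
            is_lim (fun x => exp (- gam * x) * d j x) p_infty 0) :
  forall a b : R, Rbar_lt (gamma_min f) (Finite a) ->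
  exists C S0 : R, 1 <= S0 /\
    forall s gam, S0 <= s -> a <= gam <= b -> gam <= sqrt s ->
      exists Fs Lv : R,
        is_series (Fs_term f s (rho_of s gam)) Fs /\
        has_integral_0_infty (fun x => exp (- gamma_s s gam * x) * f x) Lv /\
        Rabs (Fs - (sqrt s * Lv - 1 / 2)) <= C / sqrt s.
Proof.
  intros a b Ha.
  destruct (f_L1 a 0%nat Ha ltac:(lia)) as [A0 HA0].
  destruct (f_L1 a 1%nat Ha ltac:(lia)) as [A1 HA1].
  destruct (f_L1 a 2%nat Ha ltac:(lia)) as [A2 HA2].
  set (M := 2 * (Rabs a + Rabs b)).
  assert (HM : 0 <= M) by (unfold M; assert (Hx := Rabs_pos a); assert (Hy := Rabs_pos b); lra).
  set (B0 := A2 + 2*M*A1 + M^2*A0).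
  assert (HA0p : 0 <= A0).
  { assert (H := gen_le _ _ 0 HA0 (Rle_refl 0) (fun x _ => Rabs_pos _)). rewrite RInt_point in H. exact H. }
  assert (HA1p : 0 <= A1).
  { assert (H := gen_le _ _ 0 HA1 (Rle_refl 0) (fun x _ => Rabs_pos _)). rewrite RInt_point in H. exact H. }
  assert (HA2p : 0 <= A2).
  { assert (H := gen_le _ _ 0 HA2 (Rle_refl 0) (fun x _ => Rabs_pos _)). rewrite RInt_point in H. exact H. }
  assert (HB0 : 0 <= B0) by (unfold B0; assert (0 <= M^2) by apply pow2_ge_0; nra).
  exists (B0/8), (Rmax 1 (4*(a^2+b^2))). split. apply Rmax_l.
  intros s gam Hs [Hga Hgb] Hgs.
  assert (Hs1 : 1 <= s) by (eapply Rle_trans; [apply Rmax_l|exact Hs]).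
  assert (Hs2 : 4*(a^2+b^2) <= s) by (eapply Rle_trans; [apply Rmax_r|exact Hs]).
  set (q := sqrt s) in *.
  assert (Hq1 : 1 <= q) by (rewrite <- sqrt_1; apply sqrt_le_1_alt; lra).
  assert (Hqq : q * q = s) by (apply sqrt_sqrt; lra).
  assert (Hg2 : gam^2 <= a^2 + b^2).
  { destruct (Rle_or_lt 0 gam); nra. }
  assert (Hgq1 : 2*gam <= q) by nra.
  assert (Hgq2 : -(2*gam) <= q) by nra.
  assert (Hq0 : 0 < q) by lra.
  unfold rho_of, gamma_s. fold q.
  set (rho := 1 - gam / q).
  assert (Hrho1 : 1/2 <= rho).
  { unfold rho. apply Rmult_le_reg_r with q; auto. unfold Rdiv. field_simplify; try lra. }
  assert (Hrho2 : rho <= 3/2).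
  { unfold rho. apply Rmult_le_reg_r with q; auto. unfold Rdiv. field_simplify; try lra. }
  assert (Hrho0 : 0 < rho) by lra.
  set (c := - q * ln rho).
  assert (Hln1 : ln rho <= rho - 1).
  { assert (H := exp_ineq1_le (ln rho)). rewrite exp_ln in H; lra. }
  assert (Hln2 : - ln rho <= / rho - 1).
  { assert (H := exp_ineq1_le (ln (/ rho))). rewrite exp_ln in H by (apply Rinv_0_lt_compat; lra).
    rewrite ln_Rinv in H; lra. }
  assert (Hc1 : gam <= c).
  { unfold c. assert (gam = q * (1 - rho)) by (unfold rho; field; lra). nra. }
  assert (Hc2 : c <= gam / rho).
  { unfold c. assert (E : gam / rho = q * (/ rho - 1)) by (unfold rho; field; split; lra).
    rewrite E. nra. }
  assert (HcM : Rabs c <= M).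
  { apply Rabs_le. split.
    - unfold M. assert (Hx := Rabs_pos b). assert (Hy := Rle_abs (-a)). rewrite Rabs_Ropp in Hy. assert (Hz := Rabs_pos a). lra.
    - apply Rle_trans with (gam / rho); auto.
      destruct (Rle_or_lt 0 gam).
      + apply Rle_trans with (2 * gam).
        { assert (E : 2*gam - gam/rho = gam*(2*rho-1)/rho) by (field; lra).
          assert (0 <= gam*(2*rho-1)/rho).
          { unfold Rdiv. apply Rmult_le_pos. nra. apply Rlt_le, Rinv_0_lt_compat; lra. }
          lra. }
        unfold M. assert (Hx := Rabs_pos a). assert (Hy := Rle_abs b). lra.
      + assert (gam / rho < 0). { unfold Rdiv. apply Rmult_neg_pos. lra. apply Rinv_0_lt_compat; lra. }
        lra. }
  assert (Hac : a <= c) by lra.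
  assert (Hcmin : Rbar_lt (gamma_min f) (Finite c)).
  { apply Rbar_lt_le_trans with (Finite a); [exact Ha|simpl; lra]. }
  set (h := / q).
  assert (Hh : 0 < h) by (apply Rinv_0_lt_compat; lra).
  assert (Hch : c * h = - ln rho) by (unfold c, h; field; lra).
  assert (Hd0 := proj1 fC4).
  destruct (f_L1 c 0%nat Hcmin ltac:(lia)) as [Lv HLv0].
  assert (HLv : is_RInt_gen (fun x => exp (- c * x) * f x) (at_point 0) (Rbar_locally p_infty) Lv).
  { apply (is_RInt_gen_ext (fun x => Rabs (exp (- c * x) * d 0%nat x))); auto.
    apply (Filter_prod _ _ _ (fun a0 => a0 = 0) (fun b0 => 0 < b0)).
    - reflexivity.
    - exists 0. auto.
    - intros x y Hx Hy z Hz. simpl in Hz. subst x.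
      rewrite Rmin_left, Rmax_right in Hz by lra.
      rewrite Hd0 by lra. apply Rabs_pos_eq. apply Rmult_le_pos. apply Rlt_le, exp_pos. apply f_nonneg; lra. }
  assert (HG00 : G0 d c 0 = 1).
  { unfold G0, E0. rewrite glue_pos, Hd0 by lra. rewrite Rmult_0_r, exp_0. lra. }
  assert (Hterm : forall n, Fs_term f s rho n = G0 d c (INR (S n) * h)).
  { intros n. unfold Fs_term, G0, E0.
    assert (Hp : 0 <= INR (S n) * h) by (apply Rmult_le_pos; [apply pos_INR|lra]).
    rewrite glue_pos by auto. rewrite Hd0 by auto.
    assert (E : - c * (INR (S n) * h) = INR (S n) * ln rho).
    { replace (INR (S n) * ln rho) with (INR (S n) * - (c*h)) by (rewrite Hch; ring). ring. }
    rewrite E. rewrite <- (Rpower_pow (S n) rho Hrho0). unfold Rpower.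
    change (INR (S n) / sqrt s) with (INR (S n) * h). ring. }
  set (u := fun n => G0 d c (INR (S n) * h)).
  assert (Hsum : forall N, sum_n (Fs_term f s rho) N = sumr u (S N)).
  { intros N. rewrite sum_n_sumr. induction (S N) as [|K IH]. reflexivity.
    rewrite !sumr_S, IH, Hterm. reflexivity. }
  assert (Hint : forall N, RInt (G0 d c) 0 (INR N * h) = RInt (fun x => exp (- c * x) * f x) 0 (INR N * h)).
  { intros N. apply RInt_ext. intros x Hx.
    assert (Hp : 0 <= INR N * h) by (apply Rmult_le_pos; [apply pos_INR|lra]).
    rewrite Rmin_left in Hx by lra. unfold G0, E0. rewrite glue_pos, Hd0 by lra. reflexivity. }
  assert (HIlim : is_lim_seq (fun N => RInt (G0 d c) 0 (INR N * h)) Lv).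
  { apply is_lim_seq_ext with (fun N => RInt (fun x => exp (- c * x) * f x) 0 (INR N * h)).
    intros; symmetry; apply Hint. apply gen_lim_seq; auto. }
  assert (HIle : forall N, RInt (G0 d c) 0 (INR N * h) <= Lv).
  { intros N. rewrite Hint. apply gen_le; auto.
    apply Rmult_le_pos; [apply pos_INR|lra].
    intros x Hx. apply Rmult_le_pos. apply Rlt_le, exp_pos. apply f_nonneg; lra. }
  assert (HG0lim : is_lim_seq (fun N => G0 d c (INR N * h)) 0).
  { assert (Hl := is_lim_seq_scal_r INR h p_infty is_lim_seq_INR).
    replace (Rbar_mult p_infty h) with p_infty in Hl.
    2:{ simpl. destruct (Rle_dec 0 h); [|lra]. destruct (Rle_lt_or_eq_dec 0 h r); [reflexivity|lra]. }
    assert (Hf := f_lim c 0%nat Hcmin ltac:(lia)).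
    assert (Hc := filterlim_comp _ _ _ _ _ _ _ _ Hl Hf).
    apply is_lim_seq_ext with (fun N => exp (- c * (INR N * h)) * d 0%nat (INR N * h)).
    2: exact Hc.
    intros N. unfold G0, E0. rewrite glue_pos. reflexivity.
    apply Rmult_le_pos; [apply pos_INR|lra]. }
  assert (Hbd : forall N, Rabs (sumr (En d c h) N) <= h^2/8 * B0).
  { intros N. eapply Rle_trans.
    apply (sum_bound f d c h (Hfun d a M) fC4 Hh (Hfun_cont f d a M fC4)).
    intros; apply Hfun_bound; auto.
    apply Rmult_le_compat_l. assert (0 <= h^2) by apply pow2_ge_0. lra.
    apply (Hfun_int f d a M A0 A1 A2); auto.
    apply Rmult_le_pos; [apply pos_INR|lra]. }
  assert (Hid : forall N, RInt (G0 d c) 0 (INR N * h) + sumr (En d c h) N =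
     h/2 * (1 + 2 * sumr u N - G0 d c (INR N * h))).
  { intros N. rewrite <- HG00. exact (sum_id f d c h fC4 Hh N). }
  assert (Hu : forall n, 0 <= u n).
  { intros n. unfold u, G0, E0. assert (Hp : 0 <= INR (S n) * h) by (apply Rmult_le_pos; [apply pos_INR|lra]).
    rewrite glue_pos, Hd0 by lra. apply Rmult_le_pos. apply Rlt_le, exp_pos. apply f_nonneg; lra. }
  assert (HS0 : forall N, 0 <= sumr u N).
  { induction N. simpl; lra. rewrite sumr_S. specialize (Hu N). lra. }
  assert (HLvp : 0 <= Lv).
  { assert (H := HIle 0%nat). rewrite Rmult_0_l, RInt_point in H. exact H. }
  assert (Hub : forall N, sumr u N <= 2 * (Lv + h^2/8*B0) / h).
  { assert (0 <= h^2) by apply pow2_ge_0.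
    assert (0 <= h^2/8*B0) by (apply Rmult_le_pos; lra).
    intros [|N].
    - simpl. apply Rmult_le_pos. lra. apply Rlt_le, Rinv_0_lt_compat; lra.
    - apply Rmult_le_reg_l with h; auto.
      replace (h * (2 * (Lv + h^2/8*B0) / h)) with (2 * (Lv + h^2/8*B0)) by (field; lra).
      assert (H1 := Hid (S N)). assert (H2 := HIle (S N)). assert (H3 := Hbd (S N)).
      assert (H4 := Rle_abs (sumr (En d c h) (S N))).
      assert (H5 : G0 d c (INR (S N) * h) <= sumr u (S N)).
      { rewrite sumr_S. specialize (HS0 N). unfold u at 2. lra. }
      nra. }
  assert (Hinc : forall n, sumr u n <= sumr u (S n)).
  { intros n. rewrite sumr_S. specialize (Hu n). lra. }
  destruct (ex_finite_lim_seq_incr (sumr u) _ Hinc Hub) as [Fs HFs].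
  exists Fs, Lv. split; [|split; [exact HLv|]].
  { assert (H : is_lim_seq (sum_n (Fs_term f s rho)) Fs).
    { apply is_lim_seq_ext with (fun N => sumr u (S N)).
      intros; symmetry; apply Hsum. exact (proj1 (is_lim_seq_incr_1 _ _) HFs). }
    exact H. }
  assert (L1 : is_lim_seq (fun N => 1 + 2 * sumr u N - G0 d c (INR N * h)) (1 + 2 * Fs - 0)).
  { apply is_lim_seq_minus'; auto. apply is_lim_seq_plus'. apply is_lim_seq_const.
    exact (is_lim_seq_scal_l _ 2 Fs HFs). }
  assert (L2 : is_lim_seq (fun N => h/2 * (1 + 2 * sumr u N - G0 d c (INR N * h)) - RInt (G0 d c) 0 (INR N * h))
       (h/2 * (1 + 2 * Fs - 0) - Lv)).
  { apply is_lim_seq_minus'; auto. exact (is_lim_seq_scal_l _ (h/2) _ L1). }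
  assert (L3 : is_lim_seq (fun N => sumr (En d c h) N) (h/2 * (1 + 2 * Fs - 0) - Lv)).
  { apply is_lim_seq_ext with (2 := L2). intros N. rewrite <- (Hid N). ring. }
  assert (L4 := is_lim_seq_le _ _ _ _ Hbd (is_lim_seq_abs _ _ L3) (is_lim_seq_const _)).
  simpl in L4.
  set (X := h / 2 * (1 + 2 * Fs - 0) - Lv) in *.
  assert (E : Fs - (q * Lv - 1/2) = q * X) by (unfold X, h; field; lra).
  rewrite E, Rabs_mult, (Rabs_pos_eq q) by lra.
  replace (B0 / 8 / q) with (q * (h^2/8*B0)) by (unfold h; field; lra).
  apply Rmult_le_compat_l; lra.
Qed.
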